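(* Let $\phi:[1]^m\to[1]^n$ be a surjective $\boxplus$-morphism and $\delta:[1]\to[1]^n$ an injective $\boxplus$-morphism. Then there exists a $\boxplus$-morphism $\delta^*:[1]\to[1]^m$ with $\phi\circ\delta^*=\delta$.
   Context: $[1]=\{0<1\}$, $[1]^n$ the product poset ($[1]^0=[0]$). An interval in a poset is a non-empty subset $[x,z]=\{y:x\leq y\leq z\}$. $\boxplus$ is the category whose objects are the $[1]^n$ ($n\geq0$) and whose morphisms are the monotone functions mapping every interval onto an interval. *)

(* Defs.v *)
From mathcomp Require Import all_boot.
Set Implicit Arguments. Unset Strict Implicit. Unset Printing Implicit Defensive.

(* The poset [1]^n = {0<1}^n, as functions 'I_n -> bool with the product order.
   [1]^0 has a unique element; [1] is cube 1. *)
Definition cube (n : nat) := {ffun 'I_n -> bool}.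

Definition cle (n : nat) (x y : cube n) : bool := [forall i, x i ==> y i].

Definition in_interval (n : nat) (x z y : cube n) : Prop := cle x y /\ cle y z.

Definition monotone (m n : nat) (f : cube m -> cube n) : Prop :=
  forall x y, cle x y -> cle (f x) (f y).

Definition box_mor (m n : nat) (f : cube m -> cube n) : Prop :=
  monotone f /\
  forall x z : cube m, cle x z ->
    exists a b : cube n, cle a b /\
      forall y : cube n,
        (exists w : cube m, in_interval x z w /\ f w = y) <-> in_interval a b y.

(* Main.v *)
Require Import Defs.
From mathcomp Require Import all_boot.
Set Implicit Arguments. Unset Strict Implicit. Unset Printing Implicit Defensive.

Lemma cleP n (x y : cube n) : cle x y -> forall j, x j -> y j.
Proof. by move=> /forallP H j; apply/implyP. Qed.

Lemma cleI n (x y : cube n) : (forall j, x j -> y j) -> cle x y.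
Proof. by move=> H; apply/forallP => j; apply/implyP; apply: H. Qed.

Lemma cle_refl n (x : cube n) : cle x x.
Proof. by apply: cleI. Qed.

Lemma cle_trans n (x y z : cube n) : cle x y -> cle y z -> cle x z.
Proof. by move=> /cleP h1 /cleP h2; apply: cleI => j /h1 /h2. Qed.

Lemma cle_anti n (x y : cube n) : cle x y -> cle y x -> x = y.
Proof.
move=> /cleP h1 /cleP h2; apply/ffunP => j.
by case hx: (x j); case hy: (y j) => //; [move: (h1 j hx); rewrite hy | move: (h2 j hy); rewrite hx].
Qed.

Definition sset n (y : cube n) (i : 'I_n) : cube n := [ffun j => if j == i then true else y j].
Definition sclr n (y : cube n) (i : 'I_n) : cube n := [ffun j => if j == i then false else y j].

Lemma cle_sset n (y : cube n) i : cle y (sset y i).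
Proof. by apply: cleI => j; rewrite ffunE; case: ifP. Qed.

Lemma cov n (y v : cube n) i : y i = false -> cle y v -> cle v (sset y i) ->
  v = y \/ v = sset y i.
Proof.
move=> yi /cleP h1 /cleP h2.
case hv: (v i); [right|left]; apply/ffunP => j; rewrite ?ffunE;
  (case: (eqVneq j i) => [->|ne]; [by rewrite hv ?yi|]).
- case hvj: (v j); first by move: (h2 j hvj); rewrite ffunE (negbTE ne).
  by case hyj: (y j) => //; move: (h1 j hyj); rewrite hvj.
- case hvj: (v j); first by move: (h2 j hvj); rewrite ffunE (negbTE ne).
  by case hyj: (y j) => //; move: (h1 j hyj); rewrite hvj.
Qed.

Lemma edge m n (phi : cube m -> cube n) (mono : monotone phi) (a : cube n) (i : 'I_n)
  (ai : a i = false) : forall k (w x : cube m), #|[set j | w j]| < k -> cle x w ->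
  phi x = a -> phi w = sset a i ->
  exists (y : cube m) (j : 'I_m), y j = false /\ phi y = a /\ phi (sset y j) = sset a i.
Proof.
elim=> [//|k IH] w x hk hxw hx hw /=.
case: (boolP [exists l, w l && ~~ x l]) => [/existsP [j /andP [wj xj]] | hne]; last first.
  have exw : x = w.
    apply: cle_anti => //; apply: cleI => j wj.
    by case xj: (x j) => //; move/existsP: hne => []; exists j; rewrite wj xj.
  by move: hw; rewrite -exw hx => /ffunP /(_ i); rewrite ffunE eqxx ai.
set y := sclr w j.
have yj : y j = false by rewrite ffunE eqxx.
have ysw : sset y j = w.
  by apply/ffunP => l; rewrite !ffunE; case: (eqVneq l j) => [->|ne] //; rewrite wj.
have hxy : cle x y.
  apply: cleI => l xl; rewrite ffunE; case: (eqVneq l j) => [el|ne].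
    by move: xj; rewrite -el xl.
  exact: (cleP hxw xl).
have hyw : cle y w by have := cle_sset y j; rewrite ysw.
have h1 := mono _ _ hxy; have h2 := mono _ _ hyw.
rewrite hx in h1; rewrite hw in h2.
case: (cov ai h1 h2) => hy.
  by exists y, j; rewrite ysw hw.
apply: (IH y x) => //.
have : #|[set l | y l]| < #|[set l | w l]|.
  apply: proper_card; apply/properP; split.
    by apply/subsetP => l; rewrite !inE ffunE; case: ifP.
  by exists j; rewrite !inE ?ffunE ?eqxx.
move=> h; exact: (leq_trans h hk).
Qed.

Definition c0 : cube 1 := [ffun _ => false].
Definition c1 : cube 1 := [ffun _ => true].

Lemma cube1_eq (u v : cube 1) : u ord0 = v ord0 -> u = v.
Proof. by move=> h; apply/ffunP => j; rewrite (ord1 j). Qed.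

Lemma cube1_cases (u : cube 1) : u = c0 \/ u = c1.
Proof. by case h: (u ord0); [right|left]; apply: cube1_eq; rewrite ffunE. Qed.

Theorem mainTheorem8 (m n : nat) (phi : cube m -> cube n) (delta : cube 1 -> cube n) :
  box_mor phi -> (forall y : cube n, exists x : cube m, phi x = y) ->
  box_mor delta -> injective delta ->
  exists delta_star : cube 1 -> cube m,
    box_mor delta_star /\ (forall x : cube 1, phi (delta_star x) = delta x).
Proof.
move=> [mono_phi img_phi] surj [mono_d img_d] inj.
set a := delta c0; set b := delta c1.
have c01 : cle c0 c1 by apply: cleI => j; rewrite ffunE.
have hab : cle a b by apply: mono_d.
have neq : a <> b.
  by move=> /inj /ffunP /(_ ord0); rewrite !ffunE.
have [i [ai bi]] : exists i, a i = false /\ b i = true.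
  case: (boolP [exists j, ~~ a j && b j]) => [/existsP [j /andP [aj bj]] | hne].
    by exists j; rewrite bj (negbTE aj).
  exfalso; apply: neq; apply: cle_anti => //; apply: cleI => j bj.
  by case aj: (a j) => //; move/existsP: hne => []; exists j; rewrite aj bj.
have eb : b = sset a i.
  have [c [d [cd H]]] := img_d _ _ c01.
  have [ca _] : in_interval c d a by apply/H; exists c0; split => //; split => //; apply: cle_refl.
  have [_ bd] : in_interval c d b by apply/H; exists c1; split => //; split => //; apply: cle_refl.
  have hv : in_interval c d (sset a i).
    split; first exact: (cle_trans ca (cle_sset a i)).
    apply: (cle_trans _ bd); apply: cleI => j; rewrite ffunE.
    by case: (eqVneq j i) => [->|_] // aj; apply: (cleP hab).
  move/H: hv => [w [_ hw]]; case: (cube1_cases w) => ew; subst w.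
    by move: hw => /ffunP /(_ i); rewrite !ffunE eqxx -/a ai.
  by rewrite -hw.
have [x hx] := surj a.
have [x' hx'] := surj b.
set z : cube m := [ffun j => x j || x' j].
have hxz : cle x z by apply: cleI => j; rewrite ffunE => ->.
have hx'z : cle x' z by apply: cleI => j; rewrite ffunE => ->; rewrite orbT.
have [p [q [pq H]]] := img_phi _ _ hxz.
have [px _] : in_interval p q (phi x) by apply/H; exists x; split => //; split => //; apply: cle_refl.
have [_ zq] : in_interval p q (phi z) by apply/H; exists z; split => //; split => //; apply: cle_refl.
have hb : in_interval p q b.
  split; first by rewrite -hx in hab; exact: (cle_trans px hab).
  by rewrite -hx'; apply: (cle_trans (mono_phi _ _ hx'z)).
move/H: hb => [w [[hxw _] hw]].
have [y [j [yj [hy hy']]]] :=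
  edge mono_phi ai (ltnSn #|[set l | w l]|) hxw hx (etrans hw eb).
exists (fun u : cube 1 => if u ord0 then sset y j else y).
split; last first.
  by move=> u; case: (cube1_cases u) => ->; rewrite ffunE // hy' -eb.
have ctr : forall u v : cube 1, cle u v -> u ord0 -> v ord0.
  by move=> u v /cleP; apply.
split.
  move=> u v huv; case hu: (u ord0); case hv: (v ord0);
    rewrite ?cle_refl ?cle_sset //.
  by move: (ctr _ _ huv); rewrite hu hv => /(_ isT).
move=> u v huv; case hu: (u ord0); case hv: (v ord0).
- exists (sset y j), (sset y j); split; first exact: cle_refl.
  move=> t; split.
    move=> [w' [[h1 h2] <-]]; rewrite (ctr _ _ h1 hu); split; exact: cle_refl.
  move=> [h1 h2]; exists u; rewrite hu (cle_anti h2 h1); split => //; split => //; exact: cle_refl.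
- by move: (ctr _ _ huv); rewrite hu hv => /(_ isT).
- exists y, (sset y j); split; first exact: cle_sset.
  move=> t; split.
    move=> [w' [_ <-]]; case: (w' ord0); split; rewrite ?cle_refl ?cle_sset //.
  move=> [h1 h2]; case: (cov yj h1 h2) => ->.
    by exists u; rewrite hu; split => //; split => //; exact: cle_refl.
  by exists v; rewrite hv; split => //; split => //; exact: cle_refl.
- exists y, y; split; first exact: cle_refl.
  move=> t; split.
    move=> [w' [[h1 h2] <-]]; case hw': (w' ord0); last by split; exact: cle_refl.
    by move: (ctr _ _ h2); rewrite hw' hv => /(_ isT).
  move=> [h1 h2]; exists u; rewrite hu (cle_anti h2 h1); split => //; split => //; exact: cle_refl.
Qed.
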